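(* Let $X$ be a distance-regular graph of diameter $d\geq 2$ on $n$ vertices with degree $k$ and $\mu=c_2$. Let $\gamma,\delta>0$. If $k>\gamma n$ and $\mu\leq(1-\delta)k$, then $\mathrm{motion}(X)\geq\gamma\delta n$.
   Context: A connected graph $X$ of diameter $d$ is distance-regular if there are integers $a_i,b_i,c_i$ ($0\le i\le d$) such that for all vertices $v,w$ with $\mathrm{dist}(v,w)=i$, $w$ has exactly $c_i$ neighbours at distance $i-1$, $a_i$ at distance $i$, $b_i$ at distance $i+1$ from $v$; $X$ is $k$-regular with $k=b_0$, and $\mu=c_2$. The motion $\mathrm{motion}(X)$ is the minimum, over non-identity automorphisms of $X$, of the number of vertices not fixed by the automorphism. *)

(* Defs.v *)
From HB Require Import structures.
From mathcomp Require Import all_boot all_order all_algebra all_fingroup.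
Set Implicit Arguments. Unset Strict Implicit. Unset Printing Implicit Defensive.
Import Order.TTheory GRing.Theory Num.Theory.

Definition simple_graph (T : finType) (e : rel T) : Prop :=
  symmetric e /\ irreflexive e.

Definition connected_graph (T : finType) (e : rel T) : Prop :=
  forall x y : T, connect e x y.

Fixpoint ball (T : finType) (e : rel T) (k : nat) (x : T) : {set T} :=
  match k with
  | 0 => [set x]
  | k'.+1 => ball e k' x :|: [set z | [exists y in ball e k' x, e y z]]
  end.

(* graph distance: least k with y in ball k x (equals #|T| if unreachable) *)
Definition dist (T : finType) (e : rel T) (x y : T) : nat :=
  find (fun k => y \in ball e k x) (iota 0 #|T|).

Definition diameter (T : finType) (e : rel T) : nat :=
  \max_(v : T) \max_(w : T) dist e v w.

Definition distance_regular (T : finType) (e : rel T) (a b c : nat -> nat) : Prop :=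
  simple_graph e /\ connected_graph e /\
  forall v w : T,
    let i := dist e v w in
    [/\ #|[set u | e w u & (dist e v u).+1 == i]| = c i,
        #|[set u | e w u & dist e v u == i]| = a i &
        #|[set u | e w u & dist e v u == i.+1]| = b i].

Definition is_automorphism (T : finType) (e : rel T) (s : {perm T}) : Prop :=
  forall x y : T, e (s x) (s y) = e x y.

Definition moved (T : finType) (s : {perm T}) : nat := #|[set x | s x != x]|.

(* Main.v *)
Require Import Defs.
From HB Require Import structures.
From mathcomp Require Import all_boot all_order all_algebra all_fingroup.
From mathcomp Require Import zify lra.
Import Order.TTheory GRing.Theory Num.Theory.

Set Implicit Arguments.
Section Dist.
Variables (T : finType) (e : rel T).
Hypothesis esym : symmetric e.
Hypothesis eirr : irreflexive e.

Lemma in_ball1 x y : (y \in ball e 1 x) = (y == x) || e x y.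
Proof.
change (ball e 1 x) with ([set x] :|: [set z | [exists y0 in [set x], e y0 z]]).
rewrite !inE; congr (_ || _); apply/existsP/idP.
- by move=> [z /andP[]]; rewrite inE => /eqP ->.
- by move=> h; exists x; rewrite inE eqxx.
Qed.

Lemma in_ball2 x y u : u \in ball e 1 x -> e u y -> y \in ball e 2 x.
Proof.
move=> hu he.
change (ball e 2 x) with (ball e 1 x :|: [set z | [exists y0 in ball e 1 x, e y0 z]]).
by rewrite !inE; apply/orP; right; apply/existsP; exists u; rewrite hu.
Qed.

Lemma dist_eq x y i : (i < #|T|)%N -> y \in ball e i x ->
  (forall j, (j < i)%N -> y \notin ball e j x) -> dist e x y = i.
Proof.
move=> hi hy hj; rewrite /dist.
case: (ltngtP (find (fun k => y \in ball e k x) (iota 0 #|T|)) i) => // h.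
- have hlt := ltn_trans h hi.
  have hh : has (fun k => y \in ball e k x) (iota 0 #|T|)
    by rewrite has_find size_iota.
  have := nth_find 0 hh; rewrite /= nth_iota // add0n.
  by move: (hj _ h) => /negP.
- have := before_find 0 h; by rewrite /= nth_iota // add0n hy.
Qed.

Lemma dist_inv x y i : dist e x y = i -> (i < #|T|)%N ->
  y \in ball e i x /\ (forall j, (j < i)%N -> y \notin ball e j x).
Proof.
rewrite /dist => hd hi.
have hh : has (fun k => y \in ball e k x) (iota 0 #|T|)
  by rewrite has_find size_iota hd.
split.
- by have := nth_find 0 hh; rewrite /= hd nth_iota // add0n.
- move=> j hj; rewrite -hd in hj; have := before_find 0 hj.
  rewrite /= nth_iota ?add0n; first by move=> ->.
  by rewrite (ltn_trans hj) // hd.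
Qed.

Lemma dist0 x : dist e x x = 0.
Proof.
apply: dist_eq => //; last by rewrite /= inE.
by apply/card_gt0P; exists x.
Qed.

Lemma card2 (x y : T) : x != y -> (1 < #|T|)%N.
Proof.
move=> h; have := max_card (mem [set x; y]).
by rewrite cards2 h.
Qed.

Lemma dist1 x y : x != y -> e x y -> dist e x y = 1.
Proof.
move=> hne he; apply: dist_eq; first exact: card2 hne.
- by rewrite in_ball1 he orbT.
- by case=> // _; rewrite /= inE eq_sym.
Qed.

Lemma e_dist1 x u : (1 < #|T|)%N -> e x u = (dist e x u == 1).
Proof.
move=> hT; apply/idP/eqP.
- move=> he; apply: dist1 => //; apply/eqP => hxu; subst u.
  by rewrite eirr in he.
- move=> hd; have [h1 h0] := @dist_inv x u 1 hd hT.
  move: (h0 0 isT); rewrite /= inE => hux.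
  by move: h1; rewrite in_ball1 (negbTE hux).
Qed.

Lemma dist2 x y z : x != y -> ~~ e x y -> e x z -> e z y -> dist e x y = 2.
Proof.
move=> hxy nxy hxz hzy.
have hzx : z != x by apply/eqP => h; subst z; rewrite eirr in hxz.
have hzy' : y != z by apply/eqP => h; subst z; rewrite eirr in hzy.
apply: dist_eq.
- have := max_card (mem (x |: (y |: [set z]))).
  rewrite !cardsU1 cards1 !inE negb_or hxy eq_sym hzx hzy' /=.
  by [].
- apply: (in_ball2 (u := z)) => //; by rewrite in_ball1 hxz orbT.
- case=> [|[|//]] _; first by rewrite /= inE eq_sym.
  by rewrite in_ball1 negb_or eq_sym hxy.
Qed.

Lemma path_cross (S : {set T}) a p : path e a p -> a \in S -> last a p \notin S ->
  exists u z, [/\ u \in S, z \notin S & e u z].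
Proof.
elim: p a => [|q p IH] a /=; first by move=> _ ->.
move=> /andP[haq hp] ha hl.
case hq: (q \in S); first exact: (IH q hp hq hl).
by exists a, q; split; rewrite ?hq.
Qed.

End Dist.
Unset Implicit Arguments.
Local Open Scope ring_scope.

Section RF.
Local Open Scope ring_scope.
Lemma real_fin (R : realFieldType) (g d n k m M : R) : 0 < g -> 0 < d -> g*n < k -> m <= (1-d)*k -> k <= m + M -> g*d*n <= M.
Proof.
move=> hg hd hgk hm hk.
have h1 : d * k <= M by lra.
have h2 : d * (g * n) <= d * k by rewrite ler_pM2l // ltW.
rewrite mulrAC -mulrA mulrC -mulrA (mulrC n) ; lra.
Qed.
End RF.

Lemma arith_key (a1 b0 c2 p q cxy cyx cyw cxw ca cb cu cq1 : nat) :
 (cyw <= cu -> cu <= ca + cb -> cxw = 1 + ca -> q = 1 + cq1 -> cq1 = 1 + cb ->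
 cxy + p = b0 -> cyx + q = b0 -> cyx = cxy -> cxw = c2 -> cyw = a1 -> cxy = a1 ->
 b0 <= c2 + (p + q))%N.
Proof. lia. Qed.

Lemma arith_key2 (b0 c2 p q cxy : nat) :
 (cxy <= c2 -> cxy + p = b0 -> b0 <= c2 + (p + q))%N.
Proof. lia. Qed.

Theorem corollary4p3 (R : realFieldType) (T : finType) (e : rel T)
    (a b c : nat -> nat) (gamma delta : R) :
  distance_regular e a b c ->
  (2 <= diameter e)%N ->
  0 < gamma -> 0 < delta ->
  gamma * #|T|%:R < (b 0%N)%:R ->
  (c 2%N)%:R <= (1 - delta) * (b 0%N)%:R ->
  forall s : {perm T}, is_automorphism e s -> s != 1%g ->
    gamma * delta * #|T|%:R <= (moved s)%:R.
Proof.
move=> [[esym eirr] [hcon hdr]] hdiam hg hd hgk hmu s haut hs1.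
have D1 := @dist1 T e. have D2 := @dist2 T e eirr. have E1 := @e_dist1 T e eirr.
pose N z := [set u | e z u].
have hdeg : forall z, #|N z| = b 0%N.
  move=> z; case: (hdr z z) => _ _ hb; rewrite dist0 in hb.
  rewrite -hb; apply: eq_card => u; rewrite !inE.
  case h: (e z u) => //=.
  have hzu : z != u by apply/eqP => hzu; subst u; rewrite eirr in h.
  by rewrite (D1 z u hzu h).
have hmu2 : forall x y z, x != y -> ~~ e x y -> e x z -> e z y ->
    #|N x :&: N y| = c 2%N.
  move=> x y z hxy nxy hxz hzy.
  case: (hdr x y) => hc _ _; rewrite (D2 _ _ _ hxy nxy hxz hzy) in hc.
  rewrite -hc; apply: eq_card => u; rewrite !inE.
  case hyu: (e y u); rewrite ?andbF ?andbT //=.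
  rewrite eqSS E1 //; exact: card2 hxy.
have ha1 : forall x y, x != y -> e x y -> #|N x :&: N y| = a 1%N.
  move=> x y hxy exy.
  case: (hdr x y) => _ ha _; rewrite (D1 x y hxy exy) in ha.
  rewrite -ha; apply: eq_card => u; rewrite !inE.
  case hyu: (e y u); rewrite ?andbF ?andbT //=.
  rewrite E1 //; exact: card2 hxy.
have hb1 : forall x y, x != y -> e x y ->
    #|[set u | e y u & dist e x u == 2%N]| = b 1%N.
  move=> x y hxy exy.
  by case: (hdr x y) => _ _ hb; rewrite (D1 x y hxy exy) in hb.
have hb1pos : (0 < b 1%N)%N.
  have [v [w hvw]] : exists v w, (2 <= dist e v w)%N.
    have : [exists v, [exists w, (2 <= dist e v w)%N]].
      apply: contraT => hn.
      suff hd1 : (diameter e <= 1)%N by rewrite leqNgt ltnS hd1 in hdiam.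
      apply/bigmax_leqP => v _; apply/bigmax_leqP => w _.
      by move: hn => /existsPn /(_ v) /existsPn /(_ w); rewrite -ltnNge ltnS.
    by case/existsP => v /existsP [w h]; exists v, w.
  have hwv : w != v.
    by apply/eqP => h; subst w; rewrite dist0 in hvw.
  have nvw : ~~ e v w.
    by apply/negP => h; rewrite (D1 _ _ _ h) in hvw; rewrite // eq_sym.
  have /connectP [p hp hl] := hcon v w.
  have := @path_cross T e [set u | (u == v) || e v u] v p hp.
  rewrite !inE eqxx -hl (negbTE hwv) (negbTE nvw) => /(_ isT isT) [u [z []]].
  rewrite !inE negb_or => hu /andP[hzv nvz] euz.
  have evu : e v u.
    by case/orP: hu => // /eqP h; subst u; rewrite euz in nvz.
  have hvu : v != u by apply/eqP => h; subst u; rewrite eirr in evu.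
  rewrite -(hb1 v u hvu evu); apply/card_gt0P; exists z; rewrite !inE euz /=.
  by rewrite (D2 _ _ _ _ nvz evu euz) // eq_sym.
have [x hx] : exists x, s x != x.
  have : [exists x, s x != x].
    apply: contraT => hn; have /eqP hs1p := hs1; exfalso; apply: hs1p; apply/permP => z.
    by move: hn => /existsPn /(_ z) /negPn /eqP ->; rewrite perm1.
  by case/existsP => x h; exists x.
set y := s x.
set P := N x :\: N y. set Q := N y :\: N x.
have hmov : (#|P| + #|Q| <= moved s)%N.
  have hdisj : P :&: Q = set0.
    apply/setP => u; rewrite !inE.
    by case: (e x u); case: (e y u).
  rewrite -cardsUI hdisj cards0 addn0 /moved.
  apply: subset_leq_card; apply/subsetP => u; rewrite !inE => hu.
  apply/eqP => hsu; have hh : e y u = e x u by rewrite /y -{1}hsu haut.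
  by move: hu; rewrite hh; case: (e x u).
have hPk : (#|N x :&: N y| + #|P| = b 0%N)%N.
  by rewrite cardsID hdeg.
have hQk : (#|N y :&: N x| + #|Q| = b 0%N)%N.
  by rewrite cardsID hdeg.
have hyx : x != y by rewrite eq_sym.
have key : (b 0%N <= c 2%N + (#|P| + #|Q|))%N.
  case exy: (e x y).
  - have : (0 < #|[set u | e y u & dist e x u == 2%N]|)%N by rewrite hb1.
    case/card_gt0P => w; rewrite !inE => /andP [eyw /eqP hdw].
    have hwx : x != w by apply/eqP => h; subst w; rewrite dist0 in hdw.
    have nxw : ~~ e x w.
      by apply/negP => h; rewrite (D1 _ _ hwx h) in hdw.
    have hyw : y != w by apply/eqP => h; subst w; rewrite eirr in eyw.
    have hmuw := hmu2 x w y hwx nxw exy eyw.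
    have hayw := ha1 y w hyw eyw.
    have haxy := ha1 x y hyx exy.
    have hsub : N y :&: N w \subset ((N x :&: N w) :\ y) :|: ((Q :\ x) :\ w).
      apply/subsetP => u; rewrite !inE => /andP [eyu ewu].
      case exu: (e x u); rewrite ?ewu /= ?andbT.
      + apply/orP; left; apply/negP => /eqP h; by rewrite h eirr in eyu.
      + have h1 : u != w by apply/negP => /eqP h; rewrite h eirr in ewu.
        have h2 : u != x by apply/negP => /eqP h; rewrite -h esym ewu in nxw.
        by rewrite h1 h2 eyu orbT.
    have h1 := subset_leq_card hsub.
    have h2 := (leq_card_setU ((N x :&: N w) :\ y) ((Q :\ x) :\ w)).1.
    have h3 := cardsD1 y (N x :&: N w).
    have h4 := cardsD1 x Q.
    have h5 := cardsD1 w (Q :\ x).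
    have m1 : y \in N x :&: N w by rewrite !inE exy esym eyw.
    have m2 : x \in Q by rewrite !inE eirr esym exy.
    have m3 : w \in Q :\ x by rewrite !inE eq_sym hwx nxw eyw.
    rewrite m1 in h3; rewrite m2 in h4; rewrite m3 in h5.
    have hc : #|N y :&: N x| = #|N x :&: N y| by rewrite setIC.
    exact: (@arith_key _ _ _ _ _ _ _ _ _ _ _ _ _ h1 h2 h3 h4 h5 hPk hQk hc hmuw hayw haxy).
  - have hle : (#|N x :&: N y| <= c 2%N)%N.
      case: (set_0Vmem (N x :&: N y)) => [-> | [z]]; first by rewrite cards0.
      rewrite !inE => /andP [exz eyz].
      by rewrite (hmu2 x y z hyx (negbT exy) exz) // esym.
    exact: (@arith_key2 _ _ _ _ _ hle hPk).
have hkR : (b 0%N)%:R <= (c 2%N)%:R + (moved s)%:R :> R.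
  rewrite -natrD ler_nat; apply: (leq_trans key); by rewrite leq_add2l.
exact: (@real_fin _ _ _ _ _ _ _ hg hd hgk hmu hkR).
Qed.
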